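(* Work in round-to-nearest mode with $u=2^{-p}$. Let $x_h,x_l,y_h,y_l\in\mathbb{F}_p$ satisfy $\mathrm{RN}(x_h+x_l)=x_h$ and $\mathrm{RN}(y_h+y_l)=y_h$, and suppose $x_h$ and $y_h$ have opposite signs. Run the sloppy addition algorithm with all operations in $\mathrm{RN}$: 1. $(s_h,s_l)=\mathrm{2Sum}(x_h,y_h)$; 2. $v=\mathrm{RN}(x_l+y_l)$; 3. $w=\mathrm{RN}(s_l+v)$; 4. $(z_h,z_l)=\mathrm{Fast2Sum}(s_h,w)$. Let $\varepsilon=\dfrac{|z_h+z_l-(x_h+x_l+y_h+y_l)|}{|x_h+x_l+y_h+y_l|}$ be its relative error. (i) If $r(x_h,y_h)\le\frac12$, then $\varepsilon\le 3u^2+O(u^3)$. (ii) If $r(x_h,y_h)>\frac12$, the tie-breaking rule of $\mathrm{RN}$ is ties-to-even or ties-to-away, and $|x_h|$ and $|y_h|$ are not two consecutive floating-point numbers, then $\varepsilon\le u$.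
   Context: $\mathbb{F}_p$ is the set of radix-2, precision-$p$ floating-point numbers with unbounded exponent range. $\mathrm{RN}$ denotes rounding to nearest (with some tie-breaking rule), and $u=2^{-p}$. For reals $x,y$, $r(x,y)=\min(|x|,|y|)/\max(|x|,|y|)$ if $xy<0$, and $r(x,y)=0$ otherwise. $\mathrm{2Sum}(a,b)$ computes, in order, $s=\mathrm{RN}(a+b)$, $a'=\mathrm{RN}(s-b)$, $b'=\mathrm{RN}(s-a')$, $\delta_a=\mathrm{RN}(a-a')$, $\delta_b=\mathrm{RN}(b-b')$, $t=\mathrm{RN}(\delta_a+\delta_b)$, and returns $(s,t)$. $\mathrm{Fast2Sum}(a,b)$ computes $s=\mathrm{RN}(a+b)$ and $t=\mathrm{RN}(b-\mathrm{RN}(s-a))$, and returns $(s,t)$. *)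

(* Defs.v *)
From Stdlib Require Import Reals Lra Lia ZArith.
Open Scope R_scope.

Definition u (p : nat) : R := / 2 ^ p.

(* F_p : radix-2, precision-p floating-point numbers, unbounded exponent range *)
Definition is_fp (p : nat) (x : R) : Prop :=
  exists M e : Z, x = IZR M * powerRZ 2 e /\ (Z.abs M < 2 ^ Z.of_nat p)%Z.

Definition is_RN (p : nat) (rn : R -> R) : Prop :=
  forall x, is_fp p (rn x) /\
    forall f, is_fp p f -> Rabs (rn x - x) <= Rabs (f - x).

Definition even_fp (p : nat) (f : R) : Prop :=
  exists M e : Z, f = IZR M * powerRZ 2 e /\
    (2 ^ (Z.of_nat p - 1) <= Z.abs M < 2 ^ Z.of_nat p)%Z /\ Z.Even M.

Definition ties_to_even (p : nat) (rn : R -> R) : Prop :=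
  forall x f, is_fp p f -> f <> rn x -> Rabs (f - x) = Rabs (rn x - x) ->
    even_fp p (rn x).

Definition ties_to_away (p : nat) (rn : R -> R) : Prop :=
  forall x f, is_fp p f -> Rabs (f - x) = Rabs (rn x - x) ->
    Rabs f <= Rabs (rn x).

Definition consecutive_fp (p : nat) (a b : R) : Prop :=
  is_fp p a /\ is_fp p b /\ a <> b /\
  forall f, is_fp p f -> ~ (Rmin a b < f < Rmax a b).

Definition rr (x y : R) : R :=
  if Rlt_dec (x * y) 0 then Rmin (Rabs x) (Rabs y) / Rmax (Rabs x) (Rabs y) else 0.

Definition TwoSum (rn : R -> R) (a b : R) : R * R :=
  let s := rn (a + b) in
  let a' := rn (s - b) in
  let b' := rn (s - a') in
  let da := rn (a - a') in
  let db := rn (b - b') in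
  let t := rn (da + db) in
  (s, t).

Definition Fast2Sum (rn : R -> R) (a b : R) : R * R :=
  let s := rn (a + b) in
  let t := rn (b - rn (s - a)) in
  (s, t).

Definition SloppyAdd (rn : R -> R) (xh xl yh yl : R) : R * R :=
  let (sh, sl) := TwoSum rn xh yh in
  let v := rn (xl + yl) in
  let w := rn (sl + v) in
  Fast2Sum rn sh w.

Definition sloppy_relerr (rn : R -> R) (xh xl yh yl : R) : R :=
  let z := SloppyAdd rn xh xl yh yl in
  Rabs (fst z + snd z - (xh + xl + yh + yl)) / Rabs (xh + xl + yh + yl).

(* Main.v *)
Require Import Defs.
From Stdlib Require Import Reals Lra Lia ZArith.
Open Scope R_scope.

Lemma Rabs_le_inv a b : Rabs a <= b -> - b <= a <= b.
Proof. unfold Rabs; destruct (Rcase_abs a); intros; lra. Qed.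
Lemma Rabs_lt_inv a b : Rabs a < b -> - b < a < b.
Proof. unfold Rabs; destruct (Rcase_abs a); intros; lra. Qed.

Ltac split_Rabs :=
  repeat match goal with
  | H : context [Rabs ?x] |- _ =>
      let h := fresh "hh" in destruct (Rcase_abs x) as [h|h];
      [rewrite (Rabs_left x h) in * | rewrite (Rabs_right x h) in *]
  | |- context [Rabs ?x] =>
      let h := fresh "hh" in destruct (Rcase_abs x) as [h|h];
      [rewrite (Rabs_left x h) in * | rewrite (Rabs_right x h) in *]
  end.

Definition bpow (e : Z) : R := powerRZ 2 e.

Lemma bpow_pos e : 0 < bpow e.
Proof. unfold bpow; apply powerRZ_lt; lra. Qed.

Lemma bpow_plus a b : bpow (a + b) = bpow a * bpow b.
Proof. unfold bpow; apply powerRZ_add; lra. Qed.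

Lemma bpow_0 : bpow 0 = 1.
Proof. reflexivity. Qed.

Lemma bpow_1 : bpow 1 = 2.
Proof. unfold bpow; simpl; ring. Qed.

Lemma bpow_Rpower e : bpow e = Rpower 2 (IZR e).
Proof. unfold bpow; apply powerRZ_Rpower; lra. Qed.

Lemma bpow_lt a b : (a < b)%Z -> bpow a < bpow b.
Proof. intros H; rewrite !bpow_Rpower; apply Rpower_lt; [lra| apply IZR_lt; exact H]. Qed.

Lemma bpow_le a b : (a <= b)%Z -> bpow a <= bpow b.
Proof. intros H. destruct (Z.eq_dec a b) as [->|]; [lra|]. left; apply bpow_lt; lia. Qed.

Lemma bpow_lt_inv a b : bpow a < bpow b -> (a < b)%Z.
Proof. intros H. destruct (Z_lt_le_dec a b) as [|H']; [auto|]. apply bpow_le in H'. lra. Qed.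

Lemma bpow_le_inv a b : bpow a <= bpow b -> (a <= b)%Z.
Proof. intros H. destruct (Z_le_gt_dec a b) as [|H']; [auto|]. assert (bpow b < bpow a) by (apply bpow_lt; lia). lra. Qed.

Lemma IZR_pow2 n : (0 <= n)%Z -> IZR (2 ^ n) = bpow n.
Proof.
  intros Hn. rewrite <- (Z2Nat.id n Hn). rewrite <- pow_IZR. unfold bpow.
  rewrite pow_powerRZ. reflexivity.
Qed.

Lemma u_bpow p : u p = bpow (- Z.of_nat p).
Proof. unfold u, bpow. rewrite powerRZ_neg', <- pow_powerRZ. reflexivity. Qed.

Lemma binade x : 0 < x -> exists j, bpow j <= x < bpow (j + 1).
Proof.
  intros Hx. exists (Zfloor (Rlog 2 x)).
  destruct (Zfloor_bound (Rlog 2 x)) as [H1 H2].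
  rewrite !bpow_Rpower.
  assert (E : Rpower 2 (Rlog 2 x) = x) by (apply Rpower_Rlog; lra).
  split.
  - destruct H1 as [H1|H1].
    + left. rewrite <- E at 2. apply Rpower_lt; lra.
    + rewrite H1, E. lra.
  - rewrite <- E at 1. apply Rpower_lt; [lra|]. rewrite plus_IZR. lra.
Qed.

Definition grid (e : Z) (x : R) := exists N : Z, x = IZR N * bpow e.

Lemma fp_opp p x : is_fp p x -> is_fp p (- x).
Proof. intros [M [e [-> H]]]. exists (- M)%Z, e. rewrite opp_IZR. split; [ring| lia]. Qed.

Lemma fp_0 p : is_fp p 0.
Proof. exists 0%Z, 0%Z. split; [simpl; ring | simpl; apply Z.pow_pos_nonneg; lia]. Qed.

Lemma fp_scale p x k : is_fp p x -> is_fp p (x * bpow k).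
Proof. intros [M [e [-> H]]]. exists M, (e + k)%Z. split; [|exact H].
  change (powerRZ 2 e) with (bpow e). change (powerRZ 2 (e+k)) with (bpow (e + k)).
  rewrite bpow_plus. ring. Qed.

Lemma grid_add e x y : grid e x -> grid e y -> grid e (x + y).
Proof. intros [N ->] [M ->]. exists (N + M)%Z. rewrite plus_IZR. ring. Qed.
Lemma grid_opp e x : grid e x -> grid e (- x).
Proof. intros [N ->]. exists (- N)%Z. rewrite opp_IZR. ring. Qed.
Lemma grid_sub e x y : grid e x -> grid e y -> grid e (x - y).
Proof. intros. apply grid_add; auto. apply grid_opp; auto. Qed.
Lemma grid_0 e : grid e 0.
Proof. exists 0%Z. simpl. ring. Qed.
Lemma grid_weak e e' x : (e' <= e)%Z -> grid e x -> grid e' x.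
Proof. intros H [N ->]. exists (N * 2 ^ (e - e'))%Z. rewrite mult_IZR, IZR_pow2 by lia.
  rewrite Rmult_assoc, <- bpow_plus. unfold bpow. f_equal. f_equal. f_equal. lia. Qed.

Lemma grid_gap e x y : grid e x -> grid e y -> x < y -> x + bpow e <= y.
Proof.
  intros [N ->] [M ->] H.
  assert (IZR N < IZR M).
  { apply Rmult_lt_reg_r with (bpow e); [apply bpow_pos| exact H]. }
  apply lt_IZR in H0. assert (IZR (N + 1) <= IZR M) by (apply IZR_le; lia).
  rewrite plus_IZR in H1. pose proof (bpow_pos e).
  replace (IZR N * bpow e + bpow e) with ((IZR N + 1) * bpow e) by ring.
  apply Rmult_le_compat_r; lra.
Qed.

Section FP.
Variable p : nat.
Hypothesis Hp : (1 <= p)%nat.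
Notation P := (Z.of_nat p).

Lemma fp_grid_N N e : (Z.abs N <= 2 ^ P)%Z -> is_fp p (IZR N * bpow e).
Proof.
  intros HN.
  destruct (Z.eq_dec (Z.abs N) (2 ^ P)) as [E|E].
  2:{ exists N, e. split; [reflexivity| lia]. }
  assert (HP2 : (2 ^ P = 2 * 2 ^ (P - 1))%Z).
  { rewrite <- Z.pow_succ_r by lia. f_equal; lia. }
  assert (Hlt : (2 ^ (P - 1) < 2 ^ P)%Z) by (apply Z.pow_lt_mono_r; lia).
  assert (Hpos : (0 < 2 ^ (P - 1))%Z) by (apply Z.pow_pos_nonneg; lia).
  destruct (Z.abs_spec N) as [[_ A]|[_ A]].
  - exists (2 ^ (P - 1))%Z, (e + 1)%Z. split; [|rewrite Z.abs_eq; lia].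
    assert (N = 2 * 2 ^ (P - 1))%Z by lia. subst N.
    rewrite mult_IZR, bpow_plus, bpow_1. ring.
  - exists (- 2 ^ (P - 1))%Z, (e + 1)%Z. split; [|rewrite Z.abs_opp, Z.abs_eq; lia].
    assert (N = - (2 * 2 ^ (P - 1)))%Z by lia. subst N.
    rewrite opp_IZR, mult_IZR, opp_IZR, bpow_plus, bpow_1. ring.
Qed.

Lemma fp_of_grid e x : grid e x -> Rabs x <= bpow (e + P) -> is_fp p x.
Proof.
  intros [N ->] H. apply fp_grid_N.
  rewrite Rabs_mult, (Rabs_pos_eq (bpow e)) in H by (left; apply bpow_pos).
  rewrite bpow_plus in H. rewrite Rabs_Zabs in H.
  assert (IZR (Z.abs N) <= bpow P).
  { apply Rmult_le_reg_r with (bpow e); [apply bpow_pos|]. lra. }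
  rewrite <- IZR_pow2 in H0 by lia. apply le_IZR in H0. exact H0.
Qed.

Lemma grid_of_fp e x : is_fp p x -> bpow (e + P - 1) <= Rabs x -> grid e x.
Proof.
  intros [M [f [-> HM]]] H.
  change (powerRZ 2 f) with (bpow f) in *.
  rewrite Rabs_mult, (Rabs_pos_eq (bpow f)) in H by (left; apply bpow_pos).
  rewrite Rabs_Zabs in H.
  destruct (Z_lt_le_dec f e) as [Hf|Hf].
  - exfalso.
    assert (IZR (Z.abs M) < IZR (2 ^ P)) by (apply IZR_lt; exact HM).
    rewrite IZR_pow2 in H0 by lia.
    assert (IZR (Z.abs M) * bpow f < bpow P * bpow f).
    { apply Rmult_lt_compat_r; [apply bpow_pos| exact H0]. }
    rewrite <- bpow_plus in H1.
    assert (bpow (P + f) <= bpow (e + P - 1)) by (apply bpow_le; lia).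
    change (powerRZ 2 f) with (bpow f) in H. lra.
  - exists (M * 2 ^ (f - e))%Z. rewrite mult_IZR, IZR_pow2 by lia.
    rewrite Rmult_assoc, <- bpow_plus. unfold bpow. f_equal. f_equal. lia.
Qed.

Lemma fp_bpow k : is_fp p (bpow k).
Proof. replace (bpow k) with (IZR 1 * bpow k) by (simpl; ring). apply fp_grid_N.
  simpl. assert (2 ^ 0 < 2 ^ P)%Z by (apply Z.pow_lt_mono_r; lia). simpl in H. lia. Qed.

End FP.

Section RN.
Variable p : nat.
Hypothesis Hp : (1 <= p)%nat.
Notation P := (Z.of_nat p).
Variable rn : R -> R.
Hypothesis HRN : is_RN p rn.

Lemma rn_fp x : is_fp p (rn x).
Proof. apply (HRN x). Qed.

Lemma rn_opt x f : is_fp p f -> Rabs (rn x - x) <= Rabs (f - x).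
Proof. intros Hf. apply (proj2 (HRN x)); auto. Qed.

Lemma rn_exact x : is_fp p x -> rn x = x.
Proof. intros Hx. pose proof (rn_opt x x Hx). rewrite Rminus_diag, Rabs_R0 in H.
  pose proof (Rabs_pos (rn x - x)). assert (Rabs (rn x - x) = 0) by lra.
  destruct (Req_dec (rn x - x) 0); [lra|]. apply Rabs_no_R0 in H2. lra. Qed.

Lemma rn_0 : rn 0 = 0.
Proof. apply rn_exact, fp_0. Qed.

Lemma rn_le x f : is_fp p f -> x <= f -> rn x <= f.
Proof. intros Hf H. pose proof (rn_opt x f Hf).
  destruct (Rle_lt_dec (rn x) f); auto.
  rewrite !Rabs_pos_eq in H0 by lra. lra. Qed.

Lemma rn_ge x f : is_fp p f -> f <= x -> f <= rn x.
Proof. intros Hf H. pose proof (rn_opt x f Hf).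
  destruct (Rle_lt_dec f (rn x)); auto.
  rewrite !Rabs_left1 in H0 by lra. lra. Qed.

Lemma rn_abs_le x F : is_fp p F -> Rabs x <= F -> Rabs (rn x) <= F.
Proof. intros HF H. pose proof (rn_le x F HF). pose proof (rn_ge x (-F) (fp_opp p F HF)).
  apply Rabs_le. split; [apply H1| apply H0]; apply Rabs_le_inv in H; lra. Qed.

Lemma rn_abs_ge x F : is_fp p F -> F <= Rabs x -> F <= Rabs (rn x).
Proof. intros HF H.
  destruct (Rle_lt_dec F 0). { pose proof (Rabs_pos (rn x)); lra. }
  destruct (Rle_lt_dec 0 x).
  - rewrite Rabs_pos_eq in H by lra. pose proof (rn_ge x F HF H).
    rewrite Rabs_pos_eq; lra.
  - rewrite Rabs_left in H by lra. pose proof (rn_le x (-F) (fp_opp p F HF) ltac:(lra)).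
    rewrite Rabs_left1; lra. Qed.

Lemma near_fp x j : Rabs x <= bpow (j + 1) ->
  exists f, is_fp p f /\ Rabs (f - x) <= bpow (j - P).
Proof.
  intros Hx. set (g := bpow (j + 1 - P)).
  assert (Hg : 0 < g) by apply bpow_pos.
  assert (Hgb : bpow (j + 1) = g * bpow P) by (unfold g; rewrite <- bpow_plus; f_equal; lia).
  assert (Hg2 : bpow (j - P) = g / 2).
  { unfold g. replace (j + 1 - P)%Z with ((j - P) + 1)%Z by lia. rewrite bpow_plus, bpow_1. field. }
  set (N := Zfloor (x / g + / 2)).
  destruct (Zfloor_bound (x / g + / 2)) as [H1 H2]. fold N in H1, H2.
  exists (IZR N * g). split.
  - apply fp_grid_N; auto.
    assert (Hxg : Rabs (x / g) <= bpow P).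
    { unfold Rdiv. rewrite Rabs_mult, Rabs_inv, (Rabs_pos_eq g) by lra.
      apply Rmult_le_reg_r with g; auto.
      replace (Rabs x * / g * g) with (Rabs x) by (field; lra). lra. }
    rewrite <- IZR_pow2 in Hxg by lia. apply Rabs_le_inv in Hxg.
    assert (IZR N < IZR (2 ^ P + 1)) by (rewrite plus_IZR; lra).
    assert (IZR (- 2 ^ P - 1) < IZR N) by (rewrite minus_IZR, opp_IZR; lra).
    apply lt_IZR in H. apply lt_IZR in H0. lia.
  - rewrite Hg2. apply Rabs_le.
    assert (IZR N * g <= (x/g + /2) * g) by (apply Rmult_le_compat_r; lra).
    assert ((x/g + /2 - 1) * g <= IZR N * g) by (apply Rmult_le_compat_r; lra).
    replace ((x / g + / 2) * g) with (x + g/2) in H by (field; lra).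
    replace ((x / g + / 2 - 1) * g) with (x - g/2) in H0 by (field; lra).
    lra.
Qed.

Lemma rn_err x j : Rabs x <= bpow (j + 1) -> Rabs (rn x - x) <= bpow (j - P).
Proof. intros H. destruct (near_fp x j H) as [f [Hf Hd]].
  pose proof (rn_opt x f Hf). lra. Qed.

Lemma rn_rel x : Rabs (rn x - x) <= u p * Rabs x.
Proof.
  destruct (Req_dec x 0) as [->|Hx].
  - rewrite rn_0. rewrite Rminus_diag, Rabs_R0. lra.
  - destruct (binade (Rabs x)) as [j [H1 H2]]. apply Rabs_pos_lt; auto.
    pose proof (rn_err x j (Rlt_le _ _ H2)).
    replace (bpow (j - P)) with (bpow j * u p) in H.
    2:{ rewrite u_bpow, <- bpow_plus. f_equal. }
    pose proof (u_bpow p). pose proof (bpow_pos (- P)).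
    nra.
Qed.

Lemma low_bound h l j : is_fp p h -> rn (h + l) = h -> Rabs h < bpow (j + 1) ->
  Rabs l <= bpow (j - P).
Proof.
  intros Hh E Hb.
  assert (Hl : Rabs l = Rabs (rn (h + l) - (h + l))) by (rewrite E; rewrite <- Rabs_Ropp; f_equal; ring).
  set (x := h + l) in *.
  destruct (Rle_lt_dec (Rabs x) (bpow (j + 1))) as [Hx|Hx].
  - rewrite Hl. apply rn_err; auto.
  - exfalso. pose proof (fp_bpow p Hp (j + 1)) as Hf.
    apply Rabs_lt_inv in Hb.
    destruct (Rle_lt_dec 0 x).
    + rewrite Rabs_pos_eq in Hx by lra. pose proof (rn_opt x _ Hf).
      fold x in E. rewrite E in H. split_Rabs; lra.
    + rewrite Rabs_left in Hx by lra. pose proof (rn_opt x _ (fp_opp p _ Hf)).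
      fold x in E. rewrite E in H. split_Rabs; lra.
Qed.

Lemma low_nb_up h l c : rn (h + l) = h -> is_fp p (h + c) -> 0 < c -> l <= c / 2.
Proof. intros E Hf Hc. pose proof (rn_opt (h + l) _ Hf). rewrite E in H.
  replace (h - (h + l)) with (- l) in H by ring. replace (h + c - (h + l)) with (c - l) in H by ring.
  rewrite Rabs_Ropp in H. destruct (Rle_lt_dec l (c/2)); auto.
  split_Rabs; lra. Qed.

Lemma low_nb_dn h l c : rn (h + l) = h -> is_fp p (h - c) -> 0 < c -> - (c / 2) <= l.
Proof. intros E Hf Hc. pose proof (rn_opt (h + l) _ Hf). rewrite E in H.
  replace (h - (h + l)) with (- l) in H by ring. replace (h - c - (h + l)) with (- c - l) in H by ring.
  rewrite Rabs_Ropp in H. destruct (Rle_lt_dec (-(c/2)) l); auto.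
  split_Rabs; lra. Qed.

Lemma sterbenz a b : is_fp p a -> is_fp p b -> Rabs (a - b) <= Rabs a -> Rabs (a - b) <= Rabs b ->
  is_fp p (a - b).
Proof.
  intros Ha Hb H1 H2.
  destruct (Req_dec (a - b) 0) as [E|E]. { rewrite E. apply fp_0. }
  destruct (binade (Rabs (a - b))) as [j [J1 J2]]. apply Rabs_pos_lt; auto.
  assert (Ga : grid (j + 1 - P) a) by (apply (grid_of_fp p); auto; replace (j + 1 - P + P - 1)%Z with j by lia; lra).
  assert (Gb : grid (j + 1 - P) b) by (apply (grid_of_fp p); auto; replace (j + 1 - P + P - 1)%Z with j by lia; lra).
  apply (fp_of_grid p Hp (j + 1 - P)). apply grid_sub; auto.
  replace (j + 1 - P + P)%Z with (j + 1)%Z by lia. lra.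
Qed.

Lemma err_fp_aux a b ea eb Ma Mb : a = IZR Ma * bpow ea -> b = IZR Mb * bpow eb ->
  (Z.abs Ma < 2 ^ P)%Z -> (Z.abs Mb < 2 ^ P)%Z -> (ea <= eb)%Z ->
  is_fp p (a + b - rn (a + b)).
Proof.
  intros Ea Eb Ha Hb He.
  assert (Ga : grid ea a) by (exists Ma; auto).
  assert (Gb : grid ea b) by (apply grid_weak with eb; auto; exists Mb; auto).
  assert (Gs : grid ea (a + b)) by (apply grid_add; auto).
  assert (Hfa : is_fp p a) by (exists Ma, ea; auto).
  assert (Hfb : is_fp p b) by (exists Mb, eb; auto).
  destruct (Rle_lt_dec (Rabs (a + b)) (bpow (ea + P))) as [H|H].
  - rewrite rn_exact by (apply (fp_of_grid p Hp ea); auto). rewrite Rminus_diag. apply fp_0.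
  - assert (H1 : bpow (ea + P) <= Rabs (rn (a + b))) by (apply rn_abs_ge; [apply fp_bpow; auto| lra]).
    assert (G2 : grid ea (rn (a + b))).
    { apply grid_weak with (ea + 1)%Z; [lia|]. apply (grid_of_fp p Hp); [apply rn_fp|].
      replace (ea + 1 + P - 1)%Z with (ea + P)%Z by lia. auto. }
    apply (fp_of_grid p Hp ea). apply grid_sub; auto.
    pose proof (rn_opt (a + b) b Hfb).
    replace (b - (a + b)) with (- a) in H0 by ring. rewrite Rabs_Ropp in H0.
    assert (Rabs a <= bpow (ea + P)).
    { rewrite Ea, Rabs_mult, Rabs_Zabs, (Rabs_pos_eq (bpow ea)) by (left; apply bpow_pos).
      rewrite bpow_plus, Rmult_comm. apply Rmult_le_compat_l; [left; apply bpow_pos|].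
      rewrite <- IZR_pow2 by lia. apply IZR_le. lia. }
    rewrite <- Rabs_Ropp. replace (- (a + b - rn (a + b))) with (rn (a + b) - (a + b)) by ring. lra.
Qed.

Lemma err_fp a b : is_fp p a -> is_fp p b -> is_fp p (a + b - rn (a + b)).
Proof.
  intros [Ma [ea [Ea Ha]]] [Mb [eb [Eb Hb]]].
  destruct (Z_le_gt_dec ea eb).
  - eapply err_fp_aux; eauto.
  - rewrite (Rplus_comm a b). eapply err_fp_aux; eauto. lia.
Qed.

End RN.

Lemma bpow_m1 : bpow (-1) = / 2.
Proof. unfold bpow. simpl. field. Qed.

Section ALG.
Variable p : nat.
Hypothesis Hp : (1 <= p)%nat.
Variable rn : R -> R.
Hypothesis HRN : is_RN p rn.

Lemma fp_half x : is_fp p x -> is_fp p (x / 2).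
Proof. intros H. replace (x / 2) with (x * bpow (-1)) by (rewrite bpow_m1; field). apply fp_scale; auto. Qed.
Lemma fp_double x : is_fp p x -> is_fp p (2 * x).
Proof. intros H. replace (2 * x) with (x * bpow 1) by (rewrite bpow_1; ring). apply fp_scale; auto. Qed.

Lemma rn_ex x : is_fp p x -> rn x = x.
Proof. apply (rn_exact p rn HRN). Qed.

Lemma err_fp' a b : is_fp p a -> is_fp p b -> is_fp p (a + b - rn (a + b)).
Proof. apply (err_fp p Hp rn HRN). Qed.

Lemma ster a b : is_fp p a -> is_fp p b -> Rabs (a - b) <= Rabs a -> Rabs (a - b) <= Rabs b ->
  is_fp p (a - b).
Proof. apply (sterbenz p Hp). Qed.

Lemma f2s_key a b : is_fp p a -> is_fp p b -> Rabs b <= Rabs a -> is_fp p (rn (a + b) - a).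
Proof.
  intros Ha Hb H.
  pose proof (rn_fp p rn HRN (a + b)) as Hs.
  destruct (Rtotal_order a 0) as [Hneg|[Hz|Hpos]].
  - rewrite (Rabs_left a) in H by lra.
    destruct (Rle_lt_dec b 0).
    +
      assert (rn (a + b) <= a) by (apply (rn_le p rn HRN); auto; split_Rabs; lra).
      assert (2 * a <= rn (a + b)) by (apply (rn_ge p rn HRN); [apply fp_double; auto| split_Rabs; lra]).
      apply ster; auto; split_Rabs; lra.
    + destruct (Rle_lt_dec (-b) (a + b)).
      * assert (E : rn (a + b) = a + b).
        { apply rn_ex. replace (a + b) with (a - - b) by ring. apply ster; auto.
          apply fp_opp; auto. split_Rabs; lra. split_Rabs; lra. }
        rewrite E. replace (a + b - a) with b by ring. auto.
      * assert (a / 2 >= rn (a + b)) by (apply Rle_ge, (rn_le p rn HRN); [apply fp_half; auto| split_Rabs; lra]).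
        assert (a <= rn (a + b)) by (apply (rn_ge p rn HRN); auto; split_Rabs; lra).
        apply ster; auto; split_Rabs; lra.
  - subst a. rewrite Rabs_R0 in H. assert (b = 0) by (pose proof (Rabs_pos b); split_Rabs; lra).
    subst b. rewrite Rplus_0_l, (rn_0 p rn HRN). replace (0 - 0) with 0 by ring. apply fp_0.
  - rewrite (Rabs_pos_eq a) in H by lra.
    destruct (Rle_lt_dec 0 b).
    + assert (a <= rn (a + b)) by (apply (rn_ge p rn HRN); auto; split_Rabs; lra).
      assert (rn (a + b) <= 2 * a) by (apply (rn_le p rn HRN); [apply fp_double; auto| split_Rabs; lra]).
      apply ster; auto; split_Rabs; lra.
    + destruct (Rle_lt_dec (a + b) (-b)).
      * assert (E : rn (a + b) = a + b).
        { apply rn_ex. replace (a + b) with (a - - b) by ring. apply ster; auto.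
          apply fp_opp; auto. split_Rabs; lra. split_Rabs; lra. }
        rewrite E. replace (a + b - a) with b by ring. auto.
      * assert (a / 2 <= rn (a + b)) by (apply (rn_ge p rn HRN); [apply fp_half; auto| split_Rabs; lra]).
        assert (rn (a + b) <= a) by (apply (rn_le p rn HRN); auto; split_Rabs; lra).
        apply ster; auto; split_Rabs; lra.
Qed.

Lemma fast2sum_exact a b : is_fp p a -> is_fp p b -> Rabs b <= Rabs a ->
  fst (Fast2Sum rn a b) + snd (Fast2Sum rn a b) = a + b.
Proof.
  intros Ha Hb H. unfold Fast2Sum. cbv [fst snd].
  rewrite (rn_ex (rn (a + b) - a)) by (apply f2s_key; auto).
  replace (b - (rn (a + b) - a)) with (a + b - rn (a + b)) by ring.
  rewrite (rn_ex (a + b - rn (a + b))) by (apply err_fp'; auto). ring.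
Qed.

Lemma twosum_exact a b : is_fp p a -> is_fp p b -> 0 < a -> b < 0 ->
  (- b <= a / 2 \/ a <= - b / 2) ->
  fst (TwoSum rn a b) + snd (TwoSum rn a b) = a + b.
Proof.
  intros Ha Hb Hapos Hbneg Hcase. unfold TwoSum. cbv [fst snd].
  pose proof (rn_fp p rn HRN (a + b)) as Hs.
  set (s := rn (a + b)) in *.
  pose proof (rn_fp p rn HRN (s - b)) as Ha'.
  set (a' := rn (s - b)) in *.
  assert (Herr : rn (a + b - s) = a + b - s) by (apply rn_ex; apply err_fp'; auto).
  destruct Hcase as [HA|HB].
  - assert (s1 : a / 2 <= s) by (apply (rn_ge p rn HRN); [apply fp_half; auto| lra]).
    assert (s2 : s <= a) by (apply (rn_le p rn HRN); auto; lra).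
    assert (a1 : s <= a') by (apply (rn_ge p rn HRN); auto; lra).
    assert (a2 : a' <= 2 * s) by (apply (rn_le p rn HRN); [apply fp_double; auto| lra]).
    assert (F1 : is_fp p (s - a')) by (apply ster; auto; split_Rabs; lra).
    assert (F2 : is_fp p (a - a')) by (apply ster; auto; split_Rabs; lra).
    assert (F3 : is_fp p (b - (s - a'))).
    { replace (b - (s - a')) with (- ((s + - b) - rn (s + - b))) by (unfold a', Rminus; ring).
      apply fp_opp, err_fp'; auto. apply fp_opp; auto. }
    rewrite (rn_ex (s - a')) by auto.
    rewrite (rn_ex (a - a')) by auto.
    rewrite (rn_ex (b - (s - a'))) by auto.
    replace (a - a' + (b - (s - a'))) with (a + b - s) by ring.
    rewrite Herr. ring.
  - assert (s1 : s <= b / 2) by (apply (rn_le p rn HRN); [apply fp_half; auto| lra]).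
    assert (s2 : b <= s) by (apply (rn_ge p rn HRN); auto; lra).
    assert (F1 : is_fp p (s - b)) by (apply ster; auto; split_Rabs; lra).
    assert (Ea : a' = s - b) by (apply rn_ex; auto).
    rewrite Ea.
    replace (s - (s - b)) with b by ring. rewrite (rn_ex b) by auto.
    replace (a - (s - b)) with (a + b - s) by ring. rewrite Herr.
    replace (b - b) with 0 by ring. rewrite (rn_0 p rn HRN), Rplus_0_r, Herr. ring.
Qed.

End ALG.

Definition rneg (rn : R -> R) : R -> R := fun x => - rn (- x).

Lemma is_RN_neg p rn : is_RN p rn -> is_RN p (rneg rn).
Proof.
  intros H x. unfold rneg. split.
  - apply fp_opp. apply (H (- x)).
  - intros f Hf. destruct (H (- x)) as [_ H2].
    specialize (H2 (- f) (fp_opp p f Hf)).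
    replace (- rn (- x) - x) with (- (rn (- x) - - x)) by ring.
    replace (f - x) with (- (- f - - x)) by ring. rewrite !Rabs_Ropp. exact H2.
Qed.

Lemma rneg_eq rn x y : y = - x -> rneg rn x = - rn y.
Proof. intros ->. unfold rneg. reflexivity. Qed.

Lemma TwoSum_neg rn a b :
  TwoSum (rneg rn) (- a) (- b) = (- fst (TwoSum rn a b), - snd (TwoSum rn a b)).
Proof.
  unfold TwoSum. cbv [fst snd].
  rewrite (rneg_eq rn (- a + - b) (a + b)) by ring.
  rewrite (rneg_eq rn (- rn (a + b) - - b) (rn (a + b) - b)) by ring.
  rewrite (rneg_eq rn (- rn (a + b) - - rn (rn (a + b) - b)) (rn (a + b) - rn (rn (a + b) - b))) by ring.
  rewrite (rneg_eq rn (- a - - rn (rn (a + b) - b)) (a - rn (rn (a + b) - b))) by ring.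
  rewrite (rneg_eq rn (- b - - rn (rn (a + b) - rn (rn (a + b) - b))) (b - rn (rn (a + b) - rn (rn (a + b) - b)))) by ring.
  rewrite (rneg_eq rn (- rn (a - rn (rn (a + b) - b)) + - rn (b - rn (rn (a + b) - rn (rn (a + b) - b))))
     (rn (a - rn (rn (a + b) - b)) + rn (b - rn (rn (a + b) - rn (rn (a + b) - b))))) by ring.
  reflexivity.
Qed.

Lemma Fast2Sum_neg rn a b :
  Fast2Sum (rneg rn) (- a) (- b) = (- fst (Fast2Sum rn a b), - snd (Fast2Sum rn a b)).
Proof.
  unfold Fast2Sum. cbv [fst snd].
  rewrite (rneg_eq rn (- a + - b) (a + b)) by ring.
  rewrite (rneg_eq rn (- rn (a + b) - - a) (rn (a + b) - a)) by ring.
  rewrite (rneg_eq rn (- b - - rn (rn (a + b) - a)) (b - rn (rn (a + b) - a))) by ring.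
  reflexivity.
Qed.

Lemma SloppyAdd_neg rn xh xl yh yl :
  SloppyAdd (rneg rn) (- xh) (- xl) (- yh) (- yl) =
  (- fst (SloppyAdd rn xh xl yh yl), - snd (SloppyAdd rn xh xl yh yl)).
Proof.
  unfold SloppyAdd. rewrite TwoSum_neg.
  destruct (TwoSum rn xh yh) as [sh sl]. cbv [fst snd].
  rewrite (rneg_eq rn (- xl + - yl) (xl + yl)) by ring.
  rewrite (rneg_eq rn (- sl + - rn (xl + yl)) (sl + rn (xl + yl))) by ring.
  apply Fast2Sum_neg.
Qed.

Lemma relerr_neg rn xh xl yh yl :
  sloppy_relerr (rneg rn) (- xh) (- xl) (- yh) (- yl) = sloppy_relerr rn xh xl yh yl.
Proof.
  unfold sloppy_relerr. rewrite SloppyAdd_neg.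
  destruct (SloppyAdd rn xh xl yh yl) as [z1 z2]. cbn [fst snd].
  replace (- z1 + - z2 - (- xh + - xl + - yh + - yl))
    with (- (z1 + z2 - (xh + xl + yh + yl))) by ring.
  replace (- xh + - xl + - yh + - yl) with (- (xh + xl + yh + yl)) by ring.
  rewrite !Rabs_Ropp. reflexivity.
Qed.

Lemma bpow_2 : bpow 2 = 4.
Proof. unfold bpow; simpl; ring. Qed.

Section C1.
Variable p : nat.
Hypothesis Hp : (4 <= p)%nat.
Variable rn : R -> R.
Hypothesis HRN : is_RN p rn.
Notation P := (Z.of_nat p).

Lemma Hp1 : (1 <= p)%nat. Proof. lia. Qed.

Lemma u_pos : 0 < u p.
Proof. rewrite u_bpow; apply bpow_pos. Qed.

Lemma u_small : u p <= / 16.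
Proof. unfold u. apply Rinv_le_contravar; [lra|].
  replace 16 with (2 ^ 4) by ring. apply Rle_pow; [lra| lia]. Qed.

Lemma bpow_P : bpow P = / u p.
Proof. rewrite u_bpow. replace P with (- - P)%Z by lia. unfold bpow. rewrite powerRZ_neg'.
  rewrite Z.opp_involutive. reflexivity. Qed.

Lemma rn_err2 x j : Rabs x <= bpow j * 2 -> Rabs (rn x - x) <= bpow j * u p.
Proof. intros H. pose proof (rn_err p Hp1 rn HRN x j) as R.
  rewrite bpow_plus, bpow_1 in R. replace (j - P)%Z with (j + - P)%Z in R by lia.
  rewrite bpow_plus, <- u_bpow in R. auto. Qed.

Lemma low2 h l j : is_fp p h -> rn (h + l) = h -> Rabs h < bpow j * 2 -> Rabs l <= bpow j * u p.
Proof. intros H1 H2 H3. pose proof (low_bound p Hp1 rn HRN h l j H1 H2) as R.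
  rewrite bpow_plus, bpow_1 in R. replace (j - P)%Z with (j + - P)%Z in R by lia.
  rewrite bpow_plus, <- u_bpow in R. auto. Qed.

Lemma grid_of_fp2 e x : is_fp p x -> bpow e * / u p * / 2 <= Rabs x -> grid e x.
Proof. intros H1 H2. apply (grid_of_fp p Hp1); auto.
  replace (e + P - 1)%Z with (e + P + - 1)%Z by lia. rewrite !bpow_plus, bpow_P, bpow_m1. auto. Qed.

Lemma fp_of_grid2 e x : grid e x -> Rabs x <= bpow e * / u p -> is_fp p x.
Proof. intros H1 H2. apply (fp_of_grid p Hp1 e); auto. rewrite bpow_plus, bpow_P. auto. Qed.

Lemma fp_U3 K : is_fp p (bpow K * 3).
Proof. replace (bpow K * 3) with (IZR 3 * bpow K) by (simpl; ring). apply (fp_grid_N p Hp1).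
  assert (2 ^ 2 <= 2 ^ P)%Z by (apply Z.pow_le_mono_r; lia). simpl in *. lia. Qed.

Lemma rn_err3 x K k c : bpow k = c -> Rabs x <= bpow K * c * u p * 2 ->
  Rabs (rn x - x) <= bpow K * c * u p * u p.
Proof. intros Hc H. pose proof (rn_err2 x (K + k + - P)) as R.
  rewrite !bpow_plus, Hc, <- u_bpow in R. auto. Qed.

Lemma rn_err4 x K k c : bpow k = c -> Rabs x <= bpow K * c * 2 ->
  Rabs (rn x - x) <= bpow K * c * u p.
Proof. intros Hc H. pose proof (rn_err2 x (K + k)) as R.
  rewrite !bpow_plus, Hc in R. auto. Qed.

Lemma low3 h l K k c : bpow k = c -> is_fp p h -> rn (h + l) = h -> Rabs h < bpow K * c * u p * 2 ->
  Rabs l <= bpow K * c * u p * u p.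
Proof. intros Hc H1 H2 H. pose proof (low2 h l (K + k + - P) H1 H2) as R.
  rewrite !bpow_plus, Hc, <- u_bpow in R. auto. Qed.

Lemma low4 h l K k c : bpow k = c -> is_fp p h -> rn (h + l) = h -> Rabs h < bpow K * c * 2 ->
  Rabs l <= bpow K * c * u p.
Proof. intros Hc H1 H2 H. pose proof (low2 h l (K + k) H1 H2) as R.
  rewrite !bpow_plus, Hc in R. auto. Qed.

Lemma core1 Pp Q lP lQ :
  is_fp p Pp -> is_fp p Q -> is_fp p lP -> is_fp p lQ ->
  rn (Pp + lP) = Pp -> rn (Q + lQ) = Q ->
  Rabs Pp = Rabs (Pp + Q) + Rabs Q -> Rabs Q <= Rabs (Pp + Q) -> Pp + Q <> 0 ->
  exists U, 0 < U /\ U <= Rabs (Pp + Q) /\ is_fp p U /\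
    Rabs (rn (Pp + Q - rn (Pp + Q) + rn (lP + lQ))) <= U /\
    Rabs (lP + lQ) <= 3 * u p * U /\
    Rabs (rn (Pp + Q - rn (Pp + Q) + rn (lP + lQ)) - (Pp + Q - rn (Pp + Q) + lP + lQ))
      <= 3 * u p ^ 2 * Rabs (Pp + Q).
Proof.
  intros HP HQ HlP HlQ EP EQ Habs HQs Hs0.
  pose proof u_pos as Hu. pose proof u_small as Hus.
  set (s := Pp + Q) in *.
  destruct (binade (Rabs s)) as [K [K1 K2]]; [apply Rabs_pos_lt; auto|].
  rewrite bpow_plus, bpow_1 in K2.
  assert (HU : 0 < bpow K) by apply bpow_pos.
  assert (fpU : is_fp p (bpow K)) by apply (fp_bpow p Hp1).
  set (sh := rn s). set (sl := s - sh). set (v := rn (lP + lQ)). set (w := rn (sl + v)).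
  assert (Ht : 0 < bpow K * u p) by (apply Rmult_lt_0_compat; auto).
  assert (Ht2 : 0 < bpow K * u p * u p) by (apply Rmult_lt_0_compat; auto).
  assert (Htu : bpow K * u p <= bpow K * / 16) by (apply Rmult_le_compat_l; lra).
  assert (Ht2u : bpow K * u p * u p <= bpow K * u p * / 16) by (apply Rmult_le_compat_l; lra).
  assert (fps : is_fp p sh) by apply (rn_fp p rn HRN).
  assert (fpv : is_fp p v) by apply (rn_fp p rn HRN).
  assert (Bsl : Rabs sl <= bpow K * 1 * u p).
  { unfold sl. rewrite <- Rabs_Ropp. replace (- (s - sh)) with (rn s - s) by (unfold sh; ring).
    apply (rn_err4 s K 0 1 bpow_0). lra. }
  assert (BlP : Rabs lP <= bpow K * 2 * u p).
  { apply (low4 Pp lP K 1 2 bpow_1); auto. lra. }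
  assert (BlQ : Rabs lQ <= bpow K * 1 * u p).
  { apply (low4 Q lQ K 0 1 bpow_0); auto. lra. }
  assert (fp4t : is_fp p (bpow K * 4 * u p)).
  { replace (bpow K * 4 * u p) with (bpow (K + 2 + - P)) by (rewrite !bpow_plus, bpow_2, <- u_bpow; reflexivity).
    apply (fp_bpow p Hp1). }
  assert (fp2t : is_fp p (bpow K * 2 * u p)).
  { replace (bpow K * 2 * u p) with (bpow (K + 1 + - P)) by (rewrite !bpow_plus, bpow_1, <- u_bpow; reflexivity).
    apply (fp_bpow p Hp1). }
  assert (TlPQ : Rabs (lP + lQ) <= Rabs lP + Rabs lQ) by apply Rabs_triang.
  assert (Tslv : Rabs (sl + v) <= Rabs sl + Rabs v) by apply Rabs_triang.
  assert (Tv : Rabs v <= Rabs (lP + lQ) + Rabs (v - (lP + lQ))).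
  { replace v with ((lP + lQ) + (v - (lP + lQ))) at 1 by ring. apply Rabs_triang. }
  assert (Bv : Rabs v <= bpow K * 4 * u p).
  { apply (rn_abs_le p rn HRN); auto. lra. }
  assert (Bw : Rabs w <= bpow K).
  { apply (rn_abs_le p rn HRN); auto. lra. }
  assert (BT : Rabs (s - sh + lP + lQ) <= 4 * u p * bpow K).
  { pose proof (Rabs_triang (sl + lP) lQ) as T1. pose proof (Rabs_triang sl lP) as T2.
    change (Rabs (sl + lP + lQ) <= 4 * u p * bpow K). lra. }
  assert (Hdec : w - (s - sh + lP + lQ) = (w - (sl + v)) + (v - (lP + lQ))) by (unfold sl; ring).
  assert (Hfin : forall c, c * bpow K <= 3 * Rabs s ->
     Rabs (w - (sl + v)) + Rabs (v - (lP + lQ)) <= c * (bpow K * u p * u p) ->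
     Rabs (w - (s - sh + lP + lQ)) <= 3 * u p ^ 2 * Rabs s).
  { intros c H1 H2. rewrite Hdec. pose proof (Rabs_triang (w - (sl + v)) (v - (lP + lQ))).
    assert (u p * u p * (c * bpow K) <= u p * u p * (3 * Rabs s)) by (apply Rmult_le_compat_l; nra).
    nra. }
  exists (bpow K). split; [auto|]. split; [lra|]. split; [auto|]. split; [auto|]. split; [lra|].
  destruct (Req_dec sl 0) as [Hsl0|Hsl0].
  -
    apply (Hfin 2); [lra|].
    assert (Ew : w = v) by (unfold w; rewrite Hsl0, Rplus_0_l; apply (rn_exact p rn HRN); auto).
    rewrite Ew, Hsl0, Rplus_0_l, Rminus_diag, Rabs_R0.
    assert (Rabs (v - (lP + lQ)) <= bpow K * 2 * u p * u p).
    { apply (rn_err3 _ K 1 2 bpow_1). lra. }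
    lra.
  -
    assert (HQU : Rabs Q < bpow K).
    { destruct (Rlt_le_dec (Rabs Q) (bpow K)) as [|HQU]; auto. exfalso. apply Hsl0.
      assert (He : bpow (K + 1 + - P) = bpow K * 2 * u p) by (rewrite !bpow_plus, bpow_1, <- u_bpow; reflexivity).
      assert (G : grid (K + 1 + - P) s).
      { apply grid_add; apply grid_of_fp2; auto; rewrite He;
        replace (bpow K * 2 * u p * / u p * / 2) with (bpow K) by (field; lra); lra. }
      assert (is_fp p s).
      { apply (fp_of_grid2 (K + 1 + - P)); auto. rewrite He.
        replace (bpow K * 2 * u p * / u p) with (bpow K * 2) by (field; lra); lra. }
      unfold sl, sh. rewrite (rn_exact p rn HRN s); auto. ring. }
    assert (BlQ' : Rabs lQ <= bpow K * / 2 * u p).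
    { apply (low4 Q lQ K (-1) (/ 2) bpow_m1); auto. lra. }
    destruct (Rlt_le_dec (Rabs Pp) (bpow K * 2)) as [HPa|HPb].
    +
      assert (BlP' : Rabs lP <= bpow K * 1 * u p).
      { apply (low4 Pp lP K 0 1 bpow_0); auto. lra. }
      assert (B1 : Rabs (v - (lP + lQ)) <= bpow K * 1 * u p * u p).
      { apply (rn_err3 _ K 0 1 bpow_0). lra. }
      assert (Bv' : Rabs v <= bpow K * 2 * u p).
      { apply (rn_abs_le p rn HRN); auto. lra. }
      assert (B2 : Rabs (w - (sl + v)) <= bpow K * 2 * u p * u p).
      { apply (rn_err3 _ K 1 2 bpow_1). lra. }
      apply (Hfin 3); lra.
    + destruct (Rle_lt_dec (bpow K * 2 * u p) (Rabs Q)) as [HQb|HQs'].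
      *
        set (e := (K + 2 + - P + - P)%Z).
        assert (He : bpow e = bpow K * 4 * u p * u p) by (unfold e; rewrite !bpow_plus, bpow_2, <- u_bpow; reflexivity).
        assert (He2 : bpow e * / u p * / 2 = bpow K * 2 * u p) by (rewrite He; field; lra).
        assert (He3 : bpow e * / u p = bpow K * 4 * u p) by (rewrite He; field; lra).
        assert (GQ : grid e Q) by (apply grid_of_fp2; auto; lra).
        assert (GP : grid e Pp) by (apply grid_of_fp2; auto; lra).
        assert (Hsh : bpow K <= Rabs sh) by (apply (rn_abs_ge p rn HRN); auto).
        assert (Gsh : grid e sh) by (apply grid_of_fp2; auto; lra).
        assert (Gsl : grid e sl) by (apply grid_sub; auto; apply grid_add; auto).
        destruct (Rle_lt_dec (Rabs (lP + lQ)) (bpow K * 2 * u p)) as [Hs1|Hs2].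
        -- assert (B1 : Rabs (v - (lP + lQ)) <= bpow K * 1 * u p * u p).
           { apply (rn_err3 _ K 0 1 bpow_0). lra. }
           assert (Bv' : Rabs v <= bpow K * 2 * u p) by (apply (rn_abs_le p rn HRN); auto).
           assert (B2 : Rabs (w - (sl + v)) <= bpow K * 2 * u p * u p).
           { apply (rn_err3 _ K 1 2 bpow_1). lra. }
           apply (Hfin 3); lra.
        -- assert (B1 : Rabs (v - (lP + lQ)) <= bpow K * 2 * u p * u p).
           { apply (rn_err3 _ K 1 2 bpow_1). lra. }
           assert (Hv2 : bpow K * 2 * u p <= Rabs v) by (apply (rn_abs_ge p rn HRN); auto; lra).
           assert (Gv : grid e v) by (apply grid_of_fp2; auto; lra).
           assert (Hslv : Rabs (sl + v) <= bpow e * / u p) by (rewrite He3; lra).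
           assert (Ew : w = sl + v).
           { apply (rn_exact p rn HRN). apply (fp_of_grid2 e); auto. apply grid_add; auto. }
           apply (Hfin 2); [lra|]. rewrite Ew, Rminus_diag, Rabs_R0. lra.
      *
        assert (BlQ2 : Rabs lQ <= bpow K * 1 * u p * u p).
        { apply (low3 Q lQ K 0 1 bpow_0); auto. lra. }
        assert (B1 : Rabs (v - (lP + lQ)) <= bpow K * 2 * u p * u p).
        { apply (rn_err3 _ K 1 2 bpow_1). lra. }
        assert (B2 : Rabs (w - (sl + v)) <= bpow K * 2 * u p * u p).
        { apply (rn_err3 _ K 1 2 bpow_1). lra. }
        apply (Hfin 4); [|lra]. lra.
Qed.

End C1.

Lemma grid_bpow k j : (k <= j)%Z -> grid k (bpow j).
Proof. intros H. exists (2 ^ (j - k))%Z. rewrite IZR_pow2 by lia. rewrite <- bpow_plus. f_equal. lia. Qed.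

Section C2.
Variable p : nat.
Hypothesis Hp : (1 <= p)%nat.
Variable rn : R -> R.
Hypothesis HRN : is_RN p rn.
Notation P := (Z.of_nat p).

Lemma core2 Pp Q lP lQ :
  is_fp p Pp -> is_fp p Q -> is_fp p lP -> is_fp p lQ ->
  rn (Pp + lP) = Pp -> rn (Q + lQ) = Q ->
  0 < - Q -> - Q < Pp -> Pp <= 2 * (- Q) ->
  ~ consecutive_fp p Pp (- Q) ->
  Rabs (fst (Fast2Sum rn (Pp + Q) (rn (lP + lQ))) + snd (Fast2Sum rn (Pp + Q) (rn (lP + lQ)))
        - (Pp + Q + lP + lQ)) <= u p * Rabs (Pp + Q + lP + lQ).
Proof.
  intros HP HQ HlP HlQ EP EQ Hm1 Hm2 Hm3 Hnc.
  destruct (binade (- Q) Hm1) as [j [J1 J2]].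
  set (e := (j + 1 - P)%Z).
  set (g := bpow e).
  assert (Hg : 0 < g) by apply bpow_pos.
  assert (HgP : g * bpow P = bpow (j + 1)) by (unfold g; rewrite <- bpow_plus; f_equal; unfold e; lia).
  assert (Hj1 : bpow (j + 1) = bpow j * 2) by (rewrite bpow_plus, bpow_1; auto).
  assert (Hup : 0 < u p) by (rewrite u_bpow; apply bpow_pos).
  assert (Hgu : g = bpow j * 2 * u p).
  { unfold g, e. replace (j + 1 - P)%Z with (j + 1 + - P)%Z by lia.
    rewrite !bpow_plus, bpow_1, <- u_bpow. reflexivity. }
  pose proof (bpow_pos j) as HB.
  assert (J2' : - Q < bpow j * 2) by (rewrite <- bpow_1, <- bpow_plus; auto).
  assert (HQm : Rabs Q = (- Q)) by (rewrite Rabs_left; lra).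
  assert (GQ : grid e Q) by (apply (grid_of_fp p Hp); auto; replace (e + P - 1)%Z with j by (unfold e; lia); lra).
  assert (GP : grid e Pp) by (apply (grid_of_fp p Hp); auto; replace (e + P - 1)%Z with j by (unfold e; lia);
     rewrite Rabs_pos_eq; lra).
  set (sh := Pp + Q).
  assert (Gsh : grid e sh) by (apply grid_add; auto).
  assert (Hsh0 : 0 < sh) by (unfold sh in *; lra).
  assert (Gg : grid e g) by (exists 1%Z; unfold g; simpl; ring).
  assert (Hsh1 : g <= sh) by (pose proof (grid_gap e 0 sh (grid_0 e) Gsh Hsh0) as X; fold g in X; lra).
  assert (Hsh2 : sh <> g).
  { intros Eg. apply Hnc. split; [auto|]. split; [apply fp_opp; auto|]. split; [lra|].
    intros f Hf [F1 F2].
    rewrite Rmin_right in F1 by lra. rewrite Rmax_left in F2 by lra.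
    assert (Gf : grid e f) by (apply (grid_of_fp p Hp); auto; replace (e + P - 1)%Z with j by (unfold e; lia);
       rewrite Rabs_pos_eq; lra).
    assert (Gm : grid e (- Q)) by (apply grid_opp; auto).
    pose proof (grid_gap e (- Q) f Gm Gf F1) as X. fold g in X. unfold sh in *. lra. }
  assert (Hsh3 : g + g <= sh) by (apply (grid_gap e); auto; lra).
  assert (BlQ : Rabs lQ <= g / 2).
  { pose proof (low_bound p Hp rn HRN Q lQ j HQ EQ ltac:(lra)) as R.
    replace (j - P)%Z with (j + - P)%Z in R by lia. rewrite bpow_plus, <- u_bpow in R. lra. }
  assert (BlP : Rabs lP <= g).
  { pose proof (low_bound p Hp rn HRN Pp lP (j + 1) HP EP ltac:(rewrite Rabs_pos_eq by lra; rewrite !bpow_plus, bpow_1; lra)) as R.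
    replace (j + 1 - P)%Z with e in R by (unfold e; lia). fold g in R. lra. }
  assert (Key : - (g / 2) <= lP \/ g + g + g <= sh).
  { destruct (Rlt_le_dec Pp (bpow (j + 1))) as [Ha|Hb].
    - left. pose proof (low_bound p Hp rn HRN Pp lP j HP EP ltac:(rewrite Rabs_pos_eq; lra)) as R.
      replace (j - P)%Z with (j + - P)%Z in R by lia. rewrite bpow_plus, <- u_bpow in R.
      apply Rabs_le_inv in R. lra.
    - destruct Hb as [Hb|Hb].
      + right.
        assert (GP1 : grid (e + 1) Pp) by (apply (grid_of_fp p Hp); auto;
          replace (e + 1 + P - 1)%Z with (j + 1)%Z by (unfold e; lia); rewrite Rabs_pos_eq; lra).
        assert (G2B : grid (e + 1) (bpow (j + 1))) by (apply grid_bpow; unfold e; lia).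
        pose proof (grid_gap (e + 1) _ _ G2B GP1 Hb) as X1.
        assert (G2B' : grid e (bpow (j + 1))) by (apply grid_bpow; unfold e; lia).
        assert (Gm : grid e (- Q)) by (apply grid_opp; auto).
        pose proof (grid_gap e _ _ Gm G2B' J2) as X2.
        rewrite (bpow_plus e 1) in X1. rewrite !bpow_plus, !bpow_1 in X1, X2. fold g in X1, X2. unfold sh in *. lra.
      + left. apply (low_nb_dn p rn HRN Pp lP g); auto.
        replace (Pp - g) with (IZR (2 ^ P - 1) * bpow e).
        * apply (fp_grid_N p Hp). rewrite Z.abs_eq; [lia|].
          assert (0 < 2 ^ P)%Z by (apply Z.pow_pos_nonneg; lia). lia.
        * rewrite minus_IZR, IZR_pow2 by lia. fold g. rewrite <- Hb, <- HgP. ring. }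
  set (v := rn (lP + lQ)).
  assert (fpv : is_fp p v) by apply (rn_fp p rn HRN).
  assert (fp2g : is_fp p (g + g)).
  { replace (g + g) with (bpow (e + 1)) by (rewrite bpow_plus, bpow_1; unfold g; ring). apply (fp_bpow p Hp). }
  assert (TlPQ : Rabs (lP + lQ) <= Rabs lP + Rabs lQ) by apply Rabs_triang.
  assert (Bv : Rabs v <= g + g) by (apply (rn_abs_le p rn HRN); auto; lra).
  assert (fpsh : is_fp p sh).
  { apply (fp_of_grid p Hp e); auto. replace (e + P)%Z with (j + 1)%Z by (unfold e; lia).
    rewrite Rabs_pos_eq; unfold sh in *; lra. }
  rewrite (fast2sum_exact p Hp rn HRN sh v fpsh fpv) by (rewrite (Rabs_pos_eq sh); lra).
  replace (sh + v - (Pp + Q + lP + lQ)) with (v - (lP + lQ)) by (unfold sh; ring).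
  pose proof (rn_rel p Hp rn HRN (lP + lQ)) as R. fold v in R.
  apply Rabs_le_inv in BlP. apply Rabs_le_inv in BlQ.
  assert (HS : Rabs (lP + lQ) <= Rabs (Pp + Q + lP + lQ)).
  { rewrite (Rabs_pos_eq (Pp + Q + lP + lQ)) by (unfold sh in *; lra).
    apply Rabs_le. unfold sh in *. destruct Key; split; lra. }
  assert (u p * Rabs (lP + lQ) <= u p * Rabs (Pp + Q + lP + lQ)) by (apply Rmult_le_compat_l; lra).
  unfold sh in *. replace (Pp + Q + v - (Pp + Q + lP + lQ)) with (v - (lP + lQ)) by ring. lra.
Qed.
End C2.

Lemma div_le a b k : 0 <= k -> 0 <= b -> a <= k * b -> a / b <= k.
Proof.
  intros Hk Hb H. destruct (Req_dec b 0) as [->|Hb0].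
  - unfold Rdiv. rewrite Rinv_0, Rmult_0_r. auto.
  - unfold Rdiv. apply Rmult_le_reg_r with b; [lra|].
    rewrite Rmult_assoc, Rinv_l by auto. lra.
Qed.

Lemma rr_cases xh yh : 0 < xh -> yh < 0 ->
  (rr xh yh <= 1 / 2 -> (- yh <= xh / 2 \/ xh <= - yh / 2)) /\
  (rr xh yh > 1 / 2 -> (- yh < 2 * xh /\ xh < 2 * (- yh))).
Proof.
  intros Hx Hy. unfold rr.
  destruct (Rlt_dec (xh * yh) 0) as [_|Hn]; [|exfalso; apply Hn; nra].
  rewrite (Rabs_pos_eq xh), (Rabs_left yh) by lra.
  destruct (Rle_lt_dec (- yh) xh) as [Hle|Hlt].
  - rewrite Rmin_right, Rmax_left by lra. split; intros H.
    + left. apply Rmult_le_compat_r with (r := xh) in H; [|lra].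
      unfold Rdiv in H. rewrite Rmult_assoc, Rinv_l, Rmult_1_r in H by lra. lra.
    + assert (H' : - yh / xh * xh > 1 / 2 * xh) by (apply Rmult_gt_compat_r; lra).
      unfold Rdiv in H'. rewrite Rmult_assoc, Rinv_l, Rmult_1_r in H' by lra. lra.
  - rewrite Rmin_left, Rmax_right by lra. split; intros H.
    + right. apply Rmult_le_compat_r with (r := - yh) in H; [|lra].
      unfold Rdiv in H. rewrite Rmult_assoc, Rinv_l, Rmult_1_r in H by lra. lra.
    + assert (H' : xh / - yh * - yh > 1 / 2 * - yh) by (apply Rmult_gt_compat_r; lra).
      unfold Rdiv in H'. rewrite Rmult_assoc, Rinv_l, Rmult_1_r in H' by lra. lra.
Qed.

Lemma part1_pos p (Hp : (4 <= p)%nat) rn (HRN : is_RN p rn) xh xl yh yl :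
  is_fp p xh -> is_fp p xl -> is_fp p yh -> is_fp p yl ->
  rn (xh + xl) = xh -> rn (yh + yl) = yh -> 0 < xh -> yh < 0 ->
  rr xh yh <= 1 / 2 ->
  sloppy_relerr rn xh xl yh yl <= 3 * u p ^ 2 + 24 * u p ^ 3.
Proof.
  intros Fxh Fxl Fyh Fyl Ex Ey Hx Hy Hr.
  assert (Hp1 : (1 <= p)%nat) by lia.
  pose proof (u_pos p) as Hu. pose proof (u_small p Hp) as Hus.
  pose proof (proj1 (rr_cases xh yh Hx Hy) Hr) as Hcase.
  assert (C : exists U, 0 < U /\ U <= Rabs (xh + yh) /\ is_fp p U /\
    Rabs (rn (xh + yh - rn (xh + yh) + rn (xl + yl))) <= U /\
    Rabs (xl + yl) <= 3 * u p * U /\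
    Rabs (rn (xh + yh - rn (xh + yh) + rn (xl + yl)) - (xh + yh - rn (xh + yh) + xl + yl))
      <= 3 * u p ^ 2 * Rabs (xh + yh)).
  { destruct Hcase as [HA|HB].
    - apply (core1 p Hp rn HRN xh yh xl yl); auto.
      + rewrite (Rabs_pos_eq xh), (Rabs_pos_eq (xh + yh)), (Rabs_left yh); lra.
      + rewrite (Rabs_pos_eq (xh + yh)), (Rabs_left yh); lra.
      + lra.
    - pose proof (core1 p Hp rn HRN yh xh yl xl Fyh Fxh Fyl Fxl Ey Ex) as H.
      rewrite (Rplus_comm yh xh), (Rplus_comm yl xl) in H.
      destruct H as [U [H1 [H2 [H3 [H4 [H5 H6]]]]]].
      + rewrite (Rabs_left yh), (Rabs_left (xh + yh)), (Rabs_pos_eq xh); lra.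
      + rewrite (Rabs_left (xh + yh)), (Rabs_pos_eq xh); lra.
      + lra.
      + exists U. replace (xh + yh - rn (xh + yh) + xl + yl) with (xh + yh - rn (xh + yh) + yl + xl) by ring.
        repeat split; auto. }
  destruct C as [U [C1 [C2 [C3 [C4 [C5 C6]]]]]].
  pose proof (twosum_exact p Hp1 rn HRN xh yh Fxh Fyh Hx Hy Hcase) as T2.
  unfold sloppy_relerr, SloppyAdd.
  destruct (TwoSum rn xh yh) as [sh sl] eqn:ET. simpl in T2.
  assert (Esh : sh = rn (xh + yh)) by (change sh with (fst (sh, sl)); rewrite <- ET; reflexivity).
  assert (Esl : sl = xh + yh - rn (xh + yh)) by lra.
  rewrite Esl, Esh.
  set (s := xh + yh) in *.
  set (w := rn (s - rn s + rn (xl + yl))) in *.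
  assert (Hsh : U <= Rabs (rn s)) by (apply (rn_abs_ge p rn HRN); auto).
  rewrite (fast2sum_exact p Hp1 rn HRN (rn s) w) by (try apply (rn_fp p rn HRN); lra).
  apply div_le; [pose proof (pow_le (u p) 2); pose proof (pow_le (u p) 3); lra| apply Rabs_pos|].
  replace (rn s + w - (xh + xl + yh + yl)) with (w - (s - rn s + xl + yl)) by (unfold s; ring).
  replace (xh + xl + yh + yl) with (s + (xl + yl)) by (unfold s; ring).
  assert (HS : Rabs s <= Rabs (s + (xl + yl)) + Rabs (xl + yl)).
  { replace s with ((s + (xl + yl)) + - (xl + yl)) at 1 by ring.
    rewrite <- (Rabs_Ropp (xl + yl)). apply Rabs_triang. }
  assert (HuU : u p * U <= u p * Rabs s) by (apply Rmult_le_compat_l; lra).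
  set (k := 3 * u p ^ 2 + 24 * u p ^ 3).
  assert (Hk : 0 <= k) by (unfold k; pose proof (pow_le (u p) 2); pose proof (pow_le (u p) 3); lra).
  assert (Hk2 : 3 * u p ^ 2 <= k * (1 - 3 * u p)) by (unfold k; nra).
  assert (HSA : Rabs s * (1 - 3 * u p) <= Rabs (s + (xl + yl))) by nra.
  assert (k * (Rabs s * (1 - 3 * u p)) <= k * Rabs (s + (xl + yl))) by (apply Rmult_le_compat_l; auto).
  assert (3 * u p ^ 2 * Rabs s <= k * (1 - 3 * u p) * Rabs s) by (apply Rmult_le_compat_r; auto; apply Rabs_pos).
  nra.
Qed.

Lemma consec_sym p a b : consecutive_fp p a b -> consecutive_fp p b a.
Proof. intros [H1 [H2 [H3 H4]]]. split; [auto|]. split; [auto|]. split; [auto|].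
  intros f Hf. rewrite Rmin_comm, Rmax_comm. apply H4; auto. Qed.

Lemma part2_pos p (Hp : (2 <= p)%nat) rn (HRN : is_RN p rn) xh xl yh yl :
  is_fp p xh -> is_fp p xl -> is_fp p yh -> is_fp p yl ->
  rn (xh + xl) = xh -> rn (yh + yl) = yh -> 0 < xh -> yh < 0 ->
  rr xh yh > 1 / 2 ->
  ~ consecutive_fp p (Rabs xh) (Rabs yh) ->
  sloppy_relerr rn xh xl yh yl <= u p.
Proof.
  intros Fxh Fxl Fyh Fyl Ex Ey Hx Hy Hr Hnc.
  assert (Hp1 : (1 <= p)%nat) by lia.
  assert (Hu : 0 < u p) by (rewrite u_bpow; apply bpow_pos).
  destruct (proj2 (rr_cases xh yh Hx Hy) Hr) as [R1 R2].
  rewrite (Rabs_pos_eq xh), (Rabs_left yh) in Hnc by lra.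
  assert (Fs : is_fp p (xh + yh)).
  { replace (xh + yh) with (xh - - yh) by ring. apply (sterbenz p Hp1); auto. apply fp_opp; auto.
    all: split_Rabs; lra. }
  assert (ET : TwoSum rn xh yh = (xh + yh, 0)).
  { unfold TwoSum. cbv zeta. rewrite (rn_exact p rn HRN (xh + yh)) by auto.
    replace (xh + yh - yh) with xh by ring. rewrite (rn_exact p rn HRN xh) by auto.
    replace (xh + yh - xh) with yh by ring. rewrite (rn_exact p rn HRN yh) by auto.
    rewrite !Rminus_diag, (rn_0 p rn HRN), Rplus_0_l, (rn_0 p rn HRN). reflexivity. }
  unfold sloppy_relerr, SloppyAdd. rewrite ET.
  rewrite Rplus_0_l, (rn_exact p rn HRN (rn (xl + yl))) by apply (rn_fp p rn HRN).
  apply div_le; [lra | apply Rabs_pos |].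
  destruct (Rtotal_order xh (- yh)) as [Hlt|[Heq|Hgt]].
  -
    pose proof (core2 p Hp1 (rneg rn) (is_RN_neg p rn HRN) (- yh) (- xh) (- yl) (- xl)
      (fp_opp p _ Fyh) (fp_opp p _ Fxh) (fp_opp p _ Fyl) (fp_opp p _ Fxl)) as H.
    rewrite (rneg_eq rn (- yh + - yl) (yh + yl)), Ey in H by ring.
    rewrite (rneg_eq rn (- xh + - xl) (xh + xl)), Ex in H by ring.
    rewrite (rneg_eq rn (- yl + - xl) (xl + yl)) in H by ring.
    replace (- yh + - xh) with (- (xh + yh)) in H by ring.
    rewrite Fast2Sum_neg in H. cbn [fst snd] in H.
    replace (- fst (Fast2Sum rn (xh + yh) (rn (xl + yl))) + - snd (Fast2Sum rn (xh + yh) (rn (xl + yl)))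
       - (- (xh + yh) + - yl + - xl)) with
      (- (fst (Fast2Sum rn (xh + yh) (rn (xl + yl))) + snd (Fast2Sum rn (xh + yh) (rn (xl + yl)))
       - (xh + xl + yh + yl))) in H by ring.
    replace (- (xh + yh) + - yl + - xl) with (- (xh + xl + yh + yl)) in H by ring.
    rewrite !Rabs_Ropp in H. apply H; try reflexivity; try lra.
    rewrite Ropp_involutive. intros Hc. apply Hnc. apply consec_sym. auto.
  - assert (E0 : xh + yh = 0) by lra. rewrite E0. unfold Fast2Sum. cbn [fst snd].
    rewrite Rplus_0_l, Rminus_0_r, !(rn_exact p rn HRN (rn (xl + yl))) by apply (rn_fp p rn HRN).
    rewrite Rminus_diag, (rn_0 p rn HRN), Rplus_0_r.
    replace (xh + xl + yh + yl) with (xl + yl) by lra.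
    apply (rn_rel p Hp1 rn HRN).
  - pose proof (core2 p Hp1 rn HRN xh yh xl yl Fxh Fyh Fxl Fyl Ex Ey ltac:(lra) ltac:(lra) ltac:(lra) Hnc) as H.
    replace (xh + yh + xl + yl) with (xh + xl + yh + yl) in H by ring. exact H.
Qed.

Lemma rr_neg x y : rr (- x) (- y) = rr x y.
Proof. unfold rr. rewrite !Rabs_Ropp. replace (- x * - y) with (x * y) by ring. reflexivity. Qed.

Theorem theorem3 :
  (exists (C : R) (p0 : nat), forall (p : nat), (p0 <= p)%nat ->
    forall rn : R -> R, is_RN p rn ->
    forall xh xl yh yl : R,
      is_fp p xh -> is_fp p xl -> is_fp p yh -> is_fp p yl ->
      rn (xh + xl) = xh -> rn (yh + yl) = yh -> xh * yh < 0 ->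
      rr xh yh <= 1 / 2 ->
      sloppy_relerr rn xh xl yh yl <= 3 * u p ^ 2 + C * u p ^ 3)
  /\
  (forall (p : nat), (2 <= p)%nat ->
    forall rn : R -> R, is_RN p rn ->
    (ties_to_even p rn \/ ties_to_away p rn) ->
    forall xh xl yh yl : R,
      is_fp p xh -> is_fp p xl -> is_fp p yh -> is_fp p yl ->
      rn (xh + xl) = xh -> rn (yh + yl) = yh -> xh * yh < 0 ->
      rr xh yh > 1 / 2 ->
      ~ consecutive_fp p (Rabs xh) (Rabs yh) ->
      sloppy_relerr rn xh xl yh yl <= u p).
Proof.
  split.
  - exists 24, 4%nat. intros p Hp rn HRN xh xl yh yl Fxh Fxl Fyh Fyl Ex Ey Hxy Hr.
    destruct (Rlt_le_dec 0 xh) as [Hx|Hx].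
    + apply part1_pos; auto. nra.
    + assert (xh < 0) by (destruct Hx; auto; subst; lra).
      rewrite <- relerr_neg. apply part1_pos; auto.
      * apply is_RN_neg; auto.
      * apply fp_opp; auto.
      * apply fp_opp; auto.
      * apply fp_opp; auto.
      * apply fp_opp; auto.
      * rewrite (rneg_eq rn _ (xh + xl)) by ring. rewrite Ex. reflexivity.
      * rewrite (rneg_eq rn _ (yh + yl)) by ring. rewrite Ey. reflexivity.
      * lra.
      * nra.
      * rewrite rr_neg. auto.
  - intros p Hp rn HRN _ xh xl yh yl Fxh Fxl Fyh Fyl Ex Ey Hxy Hr Hnc.
    destruct (Rlt_le_dec 0 xh) as [Hx|Hx].
    + apply part2_pos; auto. nra.
    + assert (xh < 0) by (destruct Hx; auto; subst; lra).
      rewrite <- relerr_neg. apply part2_pos; auto.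
      * apply is_RN_neg; auto.
      * apply fp_opp; auto.
      * apply fp_opp; auto.
      * apply fp_opp; auto.
      * apply fp_opp; auto.
      * rewrite (rneg_eq rn _ (xh + xl)) by ring. rewrite Ex. reflexivity.
      * rewrite (rneg_eq rn _ (yh + yl)) by ring. rewrite Ey. reflexivity.
      * lra.
      * nra.
      * rewrite rr_neg. auto.
      * rewrite !Rabs_Ropp. auto.
Qed.
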